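(* Let $G$ be any finite forest (acyclic graph) with vertex set $[n]=\{1,\ldots,n\}$, let $H\subseteq[n]$ be arbitrary, and let $p\in(0,1)$. Then for all $u,v\in[n]$, \[ \mathbb{P}_{H,p}^G\big(u^+\leftrightarrow v^+\big)\ge \mathbb{P}_{H,p}^G\big(u^+\leftrightarrow v^-\big). \]
   Context: Bunkbed setup: for a finite graph $G$ with vertex labels $[n]$, take two copies $G^+$ and $G^-$, with vertex sets $[n]^+=\{1^+,\ldots,n^+\}$ and $[n]^-=\{1^-,\ldots,n^-\}$ and edge sets $E^+$ and $E^-$ (the copies of the edges of $G$). Given $H\subseteq[n]$, form the graph $G^\pm$ with vertex set $[n]^+\cup[n]^-$ and edge set $E^+\cup E^-\cup\{\{v^+,v^-\}: v\in H\}$. $\mathbb{P}^G_{H,p}$ is the law under which each edge of $E^+\cup E^-$ is open independently with probability $p$, and every edge $\{v^+,v^-\}$ with $v\in H$ is always open. The event $\{x\leftrightarrow y\}$ means there is a path of open edges from $x$ to $y$ in $G^\pm$. *)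

(* Defs.v *)
From HB Require Import structures.
From mathcomp Require Import all_boot all_order all_algebra.
Set Implicit Arguments. Unset Strict Implicit. Unset Printing Implicit Defensive.
Import Order.TTheory GRing.Theory Num.Theory.

Definition simple_graph (n : nat) (e : rel 'I_n) : Prop :=
  symmetric e /\ irreflexive e.

Definition forest (n : nat) (e : rel 'I_n) : Prop :=
  ~ exists s : seq 'I_n, [/\ uniq s, 2 < size s & cycle e s]%N.

(* Edges of the two copies G^+ (layer true) and G^- (layer false):
   (layer, (i, j)) with i < j and {i,j} an edge of G. *)
Definition bunk_edges (n : nat) (e : rel 'I_n) : {set bool * ('I_n * 'I_n)} :=
  [set x : bool * ('I_n * 'I_n) | ((x.2.1 < x.2.2)%N && e x.2.1 x.2.2)].

(* Bunkbed vertices: (true, v) = v^+, (false, v) = v^-.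
   Adjacency through open edges given the set w of open edges of E^+ u E^-,
   plus the always-open posts {v^+, v^-}, v in H. *)
Definition bunk_open_adj (n : nat) (H : {set 'I_n})
  (w : {set bool * ('I_n * 'I_n)}) : rel (bool * 'I_n) :=
  fun a b =>
    if a.1 == b.1 then ((a.1, (a.2, b.2)) \in w) || ((a.1, (b.2, a.2)) \in w)
    else (a.2 == b.2) && (a.2 \in H).

Definition bunk_conn (n : nat) (H : {set 'I_n})
  (w : {set bool * ('I_n * 'I_n)}) (x y : bool * 'I_n) : bool :=
  connect (bunk_open_adj H w) x y.

Definition bunk_prob (R : ringType) (n : nat) (e : rel 'I_n) (p : R)
  (A : {set bool * ('I_n * 'I_n)} -> bool) : R :=
  (\sum_(w : {set bool * ('I_n * 'I_n)} | (w \subset bunk_edges e) && A w)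
     (p ^+ #|w| * (1 - p) ^+ #|bunk_edges e :\: w|))%R.

(* Main.v *)
Require Import Defs.
From HB Require Import structures.
From mathcomp Require Import all_boot all_order all_algebra.
From mathcomp Require Import zify.
Import Order.TTheory GRing.Theory Num.Theory.
Set Implicit Arguments. Unset Strict Implicit. Unset Printing Implicit Defensive.

Lemma connect_inv (T : finType) (r : rel T) (P : pred T) s t :
  P s -> (forall x y, r x y -> P x -> P y) -> connect r s t -> P t.
Proof.
move=> Ps step /connectP [pth Hp ->].
elim: pth s Hp Ps => //= x pth IH s /andP[rsx Hp] Ps.
exact: IH x Hp (step s x rsx Ps).
Qed.

Lemma connect_map (T : finType) (r1 r2 : rel T) (f : T -> T) x y :
  (forall a b, r1 a b -> r2 (f a) (f b)) -> connect r1 x y -> connect r2 (f x) (f y).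
Proof.
move=> Hf; apply: (connect_inv (P := fun z => connect r2 (f x) (f z))) => //.
move=> a b rab Ca; apply: connect_trans Ca _; exact: connect1 (Hf _ _ rab).
Qed.

Lemma connect_mono (T : finType) (r1 r2 : rel T) x y :
  (forall a b, r1 a b -> r2 a b) -> connect r1 x y -> connect r2 x y.
Proof. by move=> H; apply: (connect_map (f := id)). Qed.

Definition restr (T : finType) (r : rel T) (X : {set T}) : rel T :=
  fun x y => [&& x \in X, y \in X & r x y].

Lemma cut_lemma (T : finType) (r : rel T) (X : {set T}) p q s t :
  (forall x y, r x y -> x \in X -> y \notin X -> x = p /\ y = q) ->
  (forall x y, r x y -> x \notin X -> y \in X -> x = q /\ y = p) ->
  s \in X -> connect r s t ->
  if t \in X then connect (restr r X) s t
  else [&& connect (restr r X) s p, r p q & connect (restr r (~: X)) q t].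
Proof.
move=> H1 H2 sX; apply: (connect_inv (P := fun t => if t \in X then connect (restr r X) s t
  else [&& connect (restr r X) s p, r p q & connect (restr r (~: X)) q t])); first by rewrite sX connect0.
move=> x y rxy /=; case xX: (x \in X); case yX: (y \in X).
- move=> C; apply: (connect_trans C); apply: connect1; by rewrite /restr xX yX.
- move=> C; have [ex ey] := H1 x y rxy xX (negbT yX); subst x y.
  by rewrite C rxy connect0.
- by have [ex ey] := H2 x y rxy (negbT xX) yX; subst x y; case/and3P.
- case/and3P=> -> -> C /=; apply: connect_trans C _; apply: connect1.
  by rewrite /restr !inE xX yX.
Qed.

Section Forest.
Variables (n : nat) (e : rel 'I_n).
Hypothesis esym : symmetric e.
Hypothesis eirr : irreflexive e.
Hypothesis efor : forest e.

Definition erem (a b : 'I_n) : rel 'I_n := fun y z =>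
  e y z && ~~ (((y == a) && (z == b)) || ((y == b) && (z == a))).

Definition side (a b : 'I_n) : {set 'I_n} := [set y | connect (erem a b) b y].

Lemma side_b a b : b \in side a b.
Proof. by rewrite inE connect0. Qed.

Lemma side_closed a b y z : e y z -> y \in side a b ->
  ~~ (((y == a) && (z == b)) || ((y == b) && (z == a))) -> z \in side a b.
Proof.
move=> eyz; rewrite !inE => C Hn; apply: (connect_trans C); apply: connect1.
by rewrite /erem eyz Hn.
Qed.

Lemma side_closed' a b y z : e y z -> z \in side a b ->
  ~~ (((y == a) && (z == b)) || ((y == b) && (z == a))) -> y \in side a b.
Proof.
move=> eyz zS Hn; apply: (side_closed (y := z)) => //; first by rewrite esym.
apply/negP => Hc; apply: (negP Hn); case/orP: Hc => /andP[-> ->]; by rewrite ?orbT.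
Qed.

Lemma forest_side a b : e a b -> a \notin side a b.
Proof.
move=> eab; apply/negP; rewrite inE => /connectP [pth Hp Ha].
move: Ha; case: (shortenP Hp) => p' Hp' Hu _ Hl.
apply: efor; exists (b :: p'); split => //.
- case: p' Hp' Hu Hl => [|c [|d p'']] /=.
  + by move=> _ _ Hba; move: eab; rewrite -Hba eirr.
  + rewrite andbT => Hbc _ Hca; move: Hbc; rewrite /erem -Hca !eqxx.
    by rewrite orbT andbF.
  + by [].
- rewrite /= rcons_path (sub_path _ Hp') /=; last by move=> x y /andP[].
  by rewrite -Hl.
Qed.

Lemma side_cross a b y z : e a b -> y \notin side a b -> z \in side a b ->
  e y z -> y = a /\ z = b.
Proof.
move=> eab yS zS eyz.
case Hc: (((y == a) && (z == b)) || ((y == b) && (z == a))).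
- case/orP: Hc => /andP[/eqP Hy /eqP Hz]; first by [].
  by move: yS; rewrite Hy side_b.
- by move: yS; rewrite (side_closed' eyz zS) ?Hc.
Qed.

End Forest.

Section PathFacts.
Variables (n : nat) (e : rel 'I_n).
Hypothesis esym : symmetric e.
Hypothesis eirr : irreflexive e.
Hypothesis efor : forest e.
Variables (u : 'I_n) (ps : seq 'I_n).
Hypothesis Hpath : path e u ps.
Hypothesis Huniq : uniq (u :: ps).

Local Notation k := (size ps).
Local Notation x i := (nth u (u :: ps) i).

Lemma xeq l m : l <= k -> m <= k -> (x l == x m) = (l == m).
Proof. by move=> hl hm; rewrite nth_uniq. Qed.

Lemma path_edge i : i < k -> e (x i) (x i.+1).
Proof. by move=> hi; move/(pathP u): Hpath => /(_ i hi). Qed.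

Lemma side_after i l : i < k -> i < l <= k -> x l \in side e (x i) (x i.+1).
Proof.
move=> hi; elim: l => [|l IH] //; case/andP => hil hlk.
case: (ltngtP i l) => [hl||hl].
- apply: (side_closed (y := x l)); first exact: path_edge.
  + by apply: IH; rewrite hl ltnW.
  + rewrite !xeq; lia.
- lia.
- by rewrite -hl side_b.
Qed.

Lemma side_before i l : i < k -> l <= i -> x l \notin side e (x i) (x i.+1).
Proof.
move=> hi hl; have -> : l = i - (i - l) by lia.
have hd : i - l <= i by lia.
elim: (i - l) hd => [|m IH] hm.
- by rewrite subn0; apply: forest_side => //; exact: path_edge.
- apply/negP => Hin; have := IH (ltnW hm); apply/negP/negPn.
  have -> : i - m = (i - m.+1).+1 by lia.
  apply: (side_closed (y := x (i - m.+1))) => //.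
  + apply: path_edge; lia.
  + rewrite !xeq; lia.
Qed.

End PathFacts.

Section Bunk.
Variables (n : nat) (e : rel 'I_n) (H : {set 'I_n}).
Hypothesis esym : symmetric e.

Definition sig (S : {set 'I_n}) (x : bool * ('I_n * 'I_n)) : bool * ('I_n * 'I_n) :=
  (((x.2.1 \in S) || (x.2.2 \in S)) (+) x.1, x.2).
Definition pi (S : {set 'I_n}) (q : bool * 'I_n) : bool * 'I_n :=
  ((q.2 \in S) (+) q.1, q.2).

Lemma sigK S : involutive (sig S).
Proof. by case=> l [y z]; rewrite /sig /= addbA addbb. Qed.

Lemma piK S : involutive (pi S).
Proof. by case=> l y; rewrite /pi /= addbA addbb. Qed.

Lemma mem_flip (S : {set 'I_n}) (w : {set bool * ('I_n * 'I_n)}) x : (x \in sig S @: w) = (sig S x \in w).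
Proof.
apply/imsetP/idP => [[y yw ->]|xw]; first by rewrite sigK.
by exists (sig S x); rewrite ?sigK.
Qed.

Lemma flip_sub (S : {set 'I_n}) (w : {set bool * ('I_n * 'I_n)}) : w \subset bunk_edges e -> sig S @: w \subset bunk_edges e.
Proof.
move/subsetP=> Hw; apply/subsetP => x; rewrite mem_flip => /Hw.
by rewrite !inE.
Qed.

Lemma card_flip (S : {set 'I_n}) (w : {set bool * ('I_n * 'I_n)}) : #|sig S @: w| = #|w|.
Proof. by apply: card_imset; apply: (can_inj (sigK S)). Qed.

Lemma adj_out (S : {set 'I_n}) (w : {set bool * ('I_n * 'I_n)}) (x y : bool * 'I_n) : x.2 \notin S -> y.2 \notin S ->
  bunk_open_adj H (sig S @: w) x y = bunk_open_adj H w x y.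
Proof.
case: x => l y1; case: y => l' z1 /= hy hz.
by rewrite /bunk_open_adj /= !mem_flip /sig /= (negbTE hy) (negbTE hz).
Qed.

Lemma adj_in (S : {set 'I_n}) (w : {set bool * ('I_n * 'I_n)}) (x y : bool * 'I_n) : x.2 \in S -> y.2 \in S ->
  bunk_open_adj H (sig S @: w) x y = bunk_open_adj H w (pi S x) (pi S y).
Proof.
case: x => l y1; case: y => l' z1 /= hy hz.
rewrite /bunk_open_adj /pi /= !mem_flip /sig /= hy hz /=.
by case: l; case: l'.
Qed.

Lemma adj_cross (S : {set 'I_n}) (w : {set bool * ('I_n * 'I_n)}) a b l : a \notin S -> b \in S ->
  bunk_open_adj H (sig S @: w) (l, a) (l, b) = bunk_open_adj H w (~~ l, a) (~~ l, b).
Proof.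
move=> ha hb; rewrite /bunk_open_adj /= !eqxx !mem_flip /sig /= hb orbT orTb.
by case: l.
Qed.

Lemma adj_sym (w : {set bool * ('I_n * 'I_n)}) : symmetric (bunk_open_adj H w).
Proof.
case=> l y [l' z]; rewrite /bunk_open_adj /= [l' == l]eq_sym [z == y]eq_sym.
case: eqP => [->|_]; first by rewrite orbC.
by case: eqP => // ->.
Qed.

Lemma adj_edge (w : {set bool * ('I_n * 'I_n)}) (x y : bool * 'I_n) : w \subset bunk_edges e -> bunk_open_adj H w x y ->
  x.2 = y.2 \/ (x.1 = y.1 /\ e x.2 y.2).
Proof.
move/subsetP=> Hw; case: x => l y1; case: y => l' z1; rewrite /bunk_open_adj /=.
case: eqP => [<-|_]; last by case/andP => /eqP ->; left.
by case/orP => /Hw; rewrite inE /= => /andP[_ ?]; right; rewrite // esym.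
Qed.

Lemma adj_crossing (S : {set 'I_n}) a b (w : {set bool * ('I_n * 'I_n)}) (x y : bool * 'I_n) : w \subset bunk_edges e ->
  (forall y z, y \notin S -> z \in S -> e y z -> y = a /\ z = b) ->
  bunk_open_adj H w x y -> x.2 \notin S -> y.2 \in S ->
  [/\ x.2 = a, y.2 = b & x.1 = y.1].
Proof.
move=> Hw Hc Hxy hx hy; case: (adj_edge Hw Hxy) => [E|[E1 E2]].
- by move: hx; rewrite E hy.
- by have [-> ->] := Hc _ _ hx hy E2.
Qed.

End Bunk.

Lemma cut_sym (T : finType) (r : rel T) (X : {set T}) p q : symmetric r ->
  (forall x y, r x y -> x \in X -> y \notin X -> x = p /\ y = q) ->
  (forall x y, r x y -> x \notin X -> y \in X -> x = q /\ y = p).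
Proof.
move=> sr H1 x y rxy hx hy; rewrite sr in rxy.
by have [-> ->] := H1 y x rxy hy hx.
Qed.

Lemma restr_sub (T : finType) (r : rel T) X x y :
  connect (restr r X) x y -> connect r x y.
Proof. by apply: connect_mono => a b /and3P[]. Qed.

Fixpoint lastidx (P : pred nat) (k : nat) : nat :=
  if P k then k else if k is k'.+1 then lastidx P k' else 0.

Lemma lastidx_spec (P : pred nat) k : P 0 ->
  [/\ P (lastidx P k), lastidx P k <= k & forall i, i <= k -> P i -> i <= lastidx P k].
Proof.
move=> P0; elim: k => [|k [IH1 IH2 IH3]] /=.
- by rewrite P0; split => // i; rewrite leqn0 => /eqP ->.
- case Pk: (P k.+1); first by split.
  split => //; first exact: leqW.
  move=> i; rewrite leq_eqVlt => /orP[/eqP ->|hi]; first by rewrite Pk.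
  exact: IH3.
Qed.

Lemma lastidx_eq (P : pred nat) k j : P j -> j <= k ->
  (forall i, i <= k -> P i -> i <= j) -> lastidx P k = j.
Proof.
move=> Pj; elim: k => [|k IH] hjk Hm /=.
- by move: hjk; rewrite leqn0 => /eqP hj; subst j; rewrite Pj.
- case Pk: (P k.+1).
  + by apply/eqP; rewrite eqn_leq hjk Hm.
  + apply: IH => [|i hi]; last by apply: Hm; rewrite leqW.
    move: hjk; rewrite leq_eqVlt => /orP[/eqP hj|//].
    by move: Pk; rewrite -hj Pj.
Qed.

Section Core.
Variables (n : nat) (e : rel 'I_n) (H : {set 'I_n}).
Hypothesis esym : symmetric e.
Hypothesis eirr : irreflexive e.
Hypothesis efor : forest e.
Variables (u : 'I_n) (ps : seq 'I_n).
Hypothesis Hpath : path e u ps.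
Hypothesis Huniq : uniq (u :: ps).

Local Notation k := (size ps).
Local Notation x i := (nth u (u :: ps) i).

Definition Pp (w : {set bool * ('I_n * 'I_n)}) : pred nat :=
  fun i => bunk_conn H w (true, u) (true, x i).
Definition Qm (w : {set bool * ('I_n * 'I_n)}) : pred nat :=
  fun i => bunk_conn H w (true, u) (false, x i).

Definition Sj j := side e (x j) (x j.+1).

Lemma core (w : {set bool * ('I_n * 'I_n)}) j :
  w \subset bunk_edges e ->
  Pp w j -> j <= k -> (forall i, i <= k -> Pp w i -> i <= j) ->
  Qm w k -> ~~ Pp w k ->
  let w2 := sig (Sj j) @: w in
  [/\ Pp w2 k, ~~ Qm w2 k, Qm w2 j & forall i, i <= k -> Qm w2 i -> i <= j].
Proof.
move=> Hw Pj hjk Hmax HA HB w2.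
have hjk' : j < k.
  by rewrite ltn_neqAle hjk andbT; apply/negP => /eqP hj; move: HB; rewrite -hj Pj.
set a := x j; set b := x j.+1; set S := Sj j.
have eab : e a b by apply: path_edge.
have aS : a \notin S by apply: forest_side.
have bS : b \in S by apply: side_b.
have Hc : forall y z, y \notin S -> z \in S -> e y z -> y = a /\ z = b.
  by move=> y z hy hz eyz; apply: side_cross.
have inS : forall i, j < i <= k -> x i \in S by move=> i hi; apply: side_after.
have uS : x 0 \notin S by apply: side_before.
set r := bunk_open_adj H w.
set r2 := bunk_open_adj H w2.
set X := [set q : bool * 'I_n | q.2 \notin S].
have memX : forall q, (q \in X) = (q.2 \notin S) by move=> q; rewrite /X in_set.
have memXc : forall q, (q \in ~: X) = (q.2 \in S) by move=> q; rewrite in_setC memX negbK.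
have Hw2 : w2 \subset bunk_edges e by apply: flip_sub.
have nplus : r (true, a) (true, b) = false.
  apply/negP => rab; have : j.+1 <= j; last by rewrite ltnn.
  apply: Hmax => //; rewrite /Pp /bunk_conn.
  apply: connect_trans Pj _; exact: connect1.
have cr1 : forall y z, r y z -> y \in X -> z \notin X -> y = (false, a) /\ z = (false, b).
  case=> l y [l' z] ryz; rewrite !memX /= negbK => hy hz.
  have [/= ey ez el] := adj_crossing esym Hw Hc ryz hy hz; subst y z l'.
  by case: l ryz; rewrite ?nplus.
have cr1' := cut_sym (adj_sym H w) cr1.
have cr2 : forall y z, r2 y z -> y \in X -> z \notin X -> y = (true, a) /\ z = (true, b).
  case=> l y [l' z] ryz; rewrite !memX /= negbK => hy hz.
  have [/= ey ez el] := adj_crossing esym Hw2 Hc ryz hy hz; subst y z l'.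
  by case: l ryz; rewrite /r2 adj_cross // -/r ?nplus.
have cr2' := cut_sym (adj_sym H w2) cr2.
have uX : (true, u) \in X by rewrite memX.
have X_eq : forall y z, restr r2 X y z = restr r X y z.
  move=> y z; rewrite /restr; case hy: (y \in X); case hz: (z \in X) => //=.
  by rewrite /r2 adj_out // -memX ?hy ?hz.
have pi_X : forall y, (pi S y \in ~: X) = (y \in ~: X).
  by case=> l y; rewrite !memXc.
have Xc_eq : forall y z, restr r2 (~: X) y z = restr r (~: X) (pi S y) (pi S z).
  move=> y z; rewrite /restr !pi_X; case hy: (y \in ~: X); case hz: (z \in ~: X) => //=.
  move: hy hz; rewrite !memXc => hy hz.
  by rewrite /r2 adj_in.
have toX : forall y, connect (restr r X) (true, u) y -> connect r2 (true, u) y.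
  move=> y C; apply: (restr_sub (X := X)); apply: connect_mono C => c d.
  by rewrite X_eq.
have toXc : forall y z, connect (restr r (~: X)) y z -> connect r2 (pi S y) (pi S z).
  move=> y z C; apply: (restr_sub (X := ~: X)); apply: connect_map C => c d.
  by rewrite Xc_eq !piK.
have cutA := cut_lemma cr1 cr1' uX HA.
rewrite memX /= (inS k) ?hjk' ?leqnn // in cutA.
case/and3P: cutA => C1 rab C2.
have back : forall t, t \notin X -> connect r2 (true, u) t -> connect r (true, u) (pi S t).
  move=> t tX C; have := cut_lemma cr2 cr2' uX C; rewrite (negbTE tX).
  case/and3P=> _ _ C3.
  apply: (connect_trans (restr_sub C1)); apply: (connect_trans (connect1 rab)).
  have -> : (false, b) = pi S (true, b) by rewrite /pi /= bS.
  apply: (restr_sub (X := ~: X)).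
  apply: connect_map C3 => c d; by rewrite Xc_eq.
split.
- rewrite /Pp /bunk_conn -/r2.
  have := cut_lemma cr1 cr1' uX Pj; rewrite memX /= aS => /toX C0.
  apply: (connect_trans C0); apply: (connect_trans (connect1 (_ : r2 (true, a) (true, b)))).
    by rewrite /r2 adj_cross.
  have := toXc _ _ C2; rewrite /pi /= bS (inS k) ?hjk' ?leqnn //.
- apply/negP => C; move/negP: HB; apply.
  have := back (false, x k); rewrite /pi /= (inS k) ?hjk' ?leqnn //=; apply => //.
  by rewrite memX (inS k) ?hjk' ?leqnn.
- by rewrite /Qm /bunk_conn -/r2; apply: toX.
- move=> i hik Qi; rewrite leqNgt; apply/negP => hji.
  suff : Pp w i by move/(Hmax i hik); rewrite leqNgt hji.
  have := back (false, x i); rewrite /pi /= (inS i) ?hji ?hik //=.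
  apply => //; by rewrite memX inS // hji hik.
Qed.

End Core.

Lemma key (R : realFieldType) (n : nat) (e : rel 'I_n) (H : {set 'I_n})
  (esym : symmetric e) (eirr : irreflexive e) (efor : forest e)
  (u : 'I_n) (ps : seq 'I_n) (Hpath : path e u ps) (Huniq : uniq (u :: ps))
  (F : {set bool * ('I_n * 'I_n)} -> R) :
  (forall w, (0 <= F w)%R) ->
  (forall S (w : {set bool * ('I_n * 'I_n)}), w \subset bunk_edges e -> F (sig S @: w) = F w) ->
  (\sum_(w : {set bool * ('I_n * 'I_n)} | (w \subset bunk_edges e) && bunk_conn H w (true, u) (false, last u ps)
         && ~~ bunk_conn H w (true, u) (true, last u ps)) F w <=
   \sum_(w : {set bool * ('I_n * 'I_n)} | (w \subset bunk_edges e) && bunk_conn H w (true, u) (true, last u ps)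
         && ~~ bunk_conn H w (true, u) (false, last u ps)) F w)%R.
Proof.
move=> F0 Finv.
have hv : nth u (u :: ps) (size ps) = last u ps := nth_last u (u :: ps).
set D := [set w : {set bool * ('I_n * 'I_n)} | (w \subset bunk_edges e) && bunk_conn H w (true, u) (false, last u ps)
         && ~~ bunk_conn H w (true, u) (true, last u ps)].
pose J (w : {set bool * ('I_n * 'I_n)}) := lastidx (Pp H u ps w) (size ps).
pose J2 (w : {set bool * ('I_n * 'I_n)}) := lastidx (Qm H u ps w) (size ps).
pose Phi (w : {set bool * ('I_n * 'I_n)}) := sig (Sj e u ps (J w)) @: w.
have HPhi : forall w, w \in D -> [/\ Phi w \subset bunk_edges e,
    bunk_conn H (Phi w) (true, u) (true, last u ps),
    ~~ bunk_conn H (Phi w) (true, u) (false, last u ps) & J2 (Phi w) = J w].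
  move=> w; rewrite inE => /andP[/andP[Hw HA] HB].
  have P0 : Pp H u ps w 0 by rewrite /Pp /bunk_conn connect0.
  have [Pj hjk Hmax] := lastidx_spec (size ps) P0.
  have := core esym eirr efor Hpath Huniq Hw Pj hjk Hmax; rewrite /Qm /Pp hv.
  move=> /(_ HA HB) [B2 A2 Q2 M2]; split => //; first exact: flip_sub.
  by apply: lastidx_eq.
have inj : {in D &, injective Phi}.
  move=> w1 w2 h1 h2 eq12.
  have [_ _ _ E1] := HPhi w1 h1; have [_ _ _ E2] := HPhi w2 h2.
  have EJ : J w1 = J w2 by rewrite -E1 -E2 eq12.
  move: eq12; rewrite /Phi EJ; apply: imset_inj; exact: (can_inj (sigK _)).
rewrite (eq_bigl (mem D)); last by move=> w; rewrite /= inE.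
rewrite (eq_bigr (fun w => F (Phi w))); last first.
  move=> w hw; have : w \in D := hw; rewrite inE => /andP[/andP[Hw _] _]; by rewrite Finv.
rewrite -big_imset //.
rewrite [X in (_ <= X)%R](bigID (mem (Phi @: D))) /=.
rewrite -[X in (X <= _)%R]addr0; apply: lerD; last by apply: sumr_ge0.
rewrite [X in (_ <= X)%R](eq_bigl (mem (Phi @: D))) //.
move=> w' /=; apply/idP/idP; first by case/andP.
move=> hw'; rewrite hw' andbT; case/imsetP: hw' => w hw ->.
by have [-> -> -> _] := HPhi w hw.
Qed.

Lemma proj_conn n (e : rel 'I_n) (H : {set 'I_n}) (esym : symmetric e)
  (w : {set bool * ('I_n * 'I_n)}) (s t : bool * 'I_n) :
  w \subset bunk_edges e -> connect (bunk_open_adj H w) s t -> connect e s.2 t.2.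
Proof.
move=> Hw; apply: (connect_inv (P := fun z => connect e s.2 z.2)) => //.
move=> y z ryz C; case: (adj_edge esym Hw ryz) => [<-|[_ eyz]] //.
by apply: (connect_trans C); apply: connect1.
Qed.

Local Open Scope ring_scope.
Unset Implicit Arguments.
Set Strict Implicit.

Theorem mainTheorem1 (R : realFieldType) (n : nat) (e : rel 'I_n)
  (H : {set 'I_n}) (p : R) (u v : 'I_n) :
  simple_graph e -> forest e -> 0 < p < 1 ->
  bunk_prob e p (fun w => bunk_conn H w (true, u) (false, v))
    <= bunk_prob e p (fun w => bunk_conn H w (true, u) (true, v)).
Proof.
move=> [esym eirr] efor /andP[p0 p1].
rewrite /bunk_prob.
set F := fun w : {set bool * ('I_n * 'I_n)} =>
  p ^+ #|w| * (1 - p) ^+ #|bunk_edges e :\: w|.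
have F0 : forall w, 0 <= F w.
  by move=> w; rewrite /F mulr_ge0 // exprn_ge0 // ?subr_ge0 ltW.
have Finv : forall S (w : {set bool * ('I_n * 'I_n)}),
    w \subset bunk_edges e -> F (sig S @: w) = F w.
  move=> S w Hw; rewrite /F !cardsD card_flip.
  by rewrite (setIidPr Hw) (setIidPr (flip_sub S Hw)) card_flip.
rewrite (bigID (fun w : {set bool * ('I_n * 'I_n)} => bunk_conn H w (true, u) (true, v))) /=.
rewrite [X in _ <= X](bigID (fun w : {set bool * ('I_n * 'I_n)} => bunk_conn H w (true, u) (false, v))) /=.
rewrite [X in _ <= X + _](eq_bigl (fun w : {set bool * ('I_n * 'I_n)} => (w \subset bunk_edges e) &&
   bunk_conn H w (true, u) (false, v) && bunk_conn H w (true, u) (true, v))); last first.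
  by move=> w; rewrite andbAC.
rewrite lerD2l.
case Cuv: (connect e u v).
- move: Cuv => /connectP [pth Hp Hv]; subst v.
  case: (shortenP Hp) => ps Hps Hu _.
  exact: key.
- rewrite big1; first by apply: sumr_ge0 => w _; apply: F0.
  move=> w /andP[/andP[Hw HA] _]; exfalso.
  by move: Cuv; rewrite (proj_conn esym Hw HA).
Qed.
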